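(* Let $M$ be a $\Sigma$-automaton and $0<\xi<1$ such that $(\Sigma^\infty,\rho_{M,\xi})$ is a pseudo-quasimetric space. Then the induced pseudo-metric space $(\mathcal A_M,\tilde\rho_{M,\xi})$ is complete: every sequence $(a_k)$ in $\mathcal A_M$ with $\tilde\rho_{M,\xi}(a_m,a_n)\to0$ as $m,n\to\infty$ has a limit $a\in\mathcal A_M$ with $\tilde\rho_{M,\xi}(a_k,a)\to0$.
   Context: $\Sigma=\{1,\dots,N\}$. A $\Sigma$-automaton $M$ has finite state set $Q=Q_0\cup\{Id,Exit\}$, input alphabet $\Sigma^2$, initial state $Id$, final state $Exit$, transition $\delta:Q\times\Sigma^2\to Q$ with $\delta(Id,(i,j))=Id$ iff $i=j$. Itinerary of $(\mathbf x,\mathbf y)$: $S_0=Id$, $S_k=\delta(S_{k-1},(x_k,y_k))$, stopped at $Exit$; $T_M(\mathbf x,\mathbf y)$ = largest $k$ with $S_k\ne Exit$ (possibly $\infty$); $\rho_{M,\xi}(\mathbf x,\mathbf y)=\xi^{T_M(\mathbf x,\mathbf y)}$ ($\xi^\infty=0$). A pseudo-quasimetric space $(\mathcal A,\rho)$: $\rho\ge0$, $\rho(x,x)=0$, symmetric, $\rho(x,z)\le C(\rho(x,y)+\rho(y,z))$ for a fixed $C\ge1$. $\mathcal A_M=\Sigma^\infty/\sim$ where $\mathbf x\sim\mathbf y$ iff $\rho_{M,\xi}(\mathbf x,\mathbf y)=0$, and $\tilde\rho_{M,\xi}([\mathbf x],[\mathbf y])=\inf\{\rho_{M,\xi}(\mathbf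 a,\mathbf b):\mathbf a\in[\mathbf x],\mathbf b\in[\mathbf y]\}$. *)

(* Defs.v *)
From HB Require Import structures.
From mathcomp Require Import all_boot all_order all_algebra.
From mathcomp Require Import boolp classical_sets reals.
Set Implicit Arguments. Unset Strict Implicit. Unset Printing Implicit Defensive.
Import Order.TTheory GRing.Theory Num.Theory.
Local Open Scope ring_scope.
Local Open Scope classical_set_scope.

(* Sigma = {1,..,N} is represented by 'I_N (values 0..N-1);
   Sigma^infty is nat -> 'I_N, where index k stands for the paper's x_{k+1}. *)

Definition itin (N : nat) (Q : finType) (delta : Q -> 'I_N * 'I_N -> Q)
  (Id Exit : Q) (x y : nat -> 'I_N) : nat -> Q :=
  fix S k := match k with
             | 0 => Id
             | k'.+1 => let s := S k' in
                        if s == Exit then Exit else delta s (x k', y k')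
             end.

(* rho_{M,xi}(x,y) = xi ^ T_M(x,y), where T_M = largest k with S_k <> Exit
   = (first k with S_k = Exit) - 1, and xi^infty = 0 if Exit is never reached. *)
Definition rhoM (R : realType) (N : nat) (Q : finType)
  (delta : Q -> 'I_N * 'I_N -> Q) (Id Exit : Q) (xi : R)
  (x y : nat -> 'I_N) : R :=
  match pselect (exists k, itin delta Id Exit x y k == Exit) with
  | left H => xi ^+ (ex_minn H).-1
  | right _ => 0
  end.

Definition pseudo_quasimetric (R : realType) (A : Type) (rho : A -> A -> R) :=
  exists C : R, 1 <= C /\
   (forall x y, 0 <= rho x y) /\ (forall x, rho x x = 0) /\
   (forall x y, rho x y = rho y x) /\
   (forall x y z, rho x z <= C * (rho x y + rho y z)).

(* tilde rho on classes [x], [y] (with [x] = {a | rho x a = 0}),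
   expressed through representatives x, y. *)
Definition rho_tilde (R : realType) (A : Type) (rho : A -> A -> R) (x y : A) : R :=
  inf [set r | exists a b, rho x a = 0 /\ rho y b = 0 /\ r = rho a b].

(* Main.v *)
Require Import Defs.
From HB Require Import structures.
From mathcomp Require Import all_boot all_order all_algebra.
From mathcomp Require Import boolp classical_sets reals.
From mathcomp Require Import ring lra.
Import Order.TTheory GRing.Theory Num.Theory.
Local Open Scope ring_scope.

Lemma pow_small (R : realType) (xi eps : R) :
  0 < xi -> xi < 1 -> 0 < eps -> exists n : nat, xi ^+ n < eps.
Proof.
move=> xi0 xi1 e0.
set h := xi^-1 - 1.
have h0 : 0 < h by rewrite /h subr_gt0 invf_gt1.
have hx : xi * (1 + h) = 1 by rewrite /h addrC subrK mulfV ?gt_eqF.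
have B : forall n : nat, xi ^+ n * (1 + n%:R * h) <= 1.
  elim=> [|n IH]; first by rewrite expr0 mul0r addr0 mulr1.
  rewrite exprS -nat1r.
  have xn0 : 0 <= xi ^+ n by rewrite exprn_ge0 // ltW.
  have nh0 : 0 <= n%:R * h by rewrite mulr_ge0 // ltW.
  set X := xi ^+ n in IH xn0 *; set t := n%:R * h in IH nh0 *.
  have E : xi * X * (1 + (1 + n%:R) * h) = X * (1 + t) * (xi * (1 + h)) - xi * X * h * t.
    by rewrite /t; ring.
  rewrite E hx mulr1.
  have : 0 <= xi * X * h * t by rewrite !mulr_ge0 // ltW.
  lra.
have [n Hn] : exists n : nat, (eps * h)^-1 < n%:R.
  exists (Num.bound (eps * h)^-1); apply: archi_boundP.
  by rewrite invr_ge0 ltW // mulr_gt0.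
exists n.
have xn0 : 0 < xi ^+ n by rewrite exprn_gt0.
have := B n.
have ehp : 0 < eps * h by rewrite mulr_gt0.
have : 1 < n%:R * (eps * h) by rewrite -ltr_pdivrMr // div1r.
nra.
Qed.

Lemma itin_prefix (N : nat) (Q : finType) (delta : Q -> 'I_N * 'I_N -> Q)
  (Id Exit : Q) (x y y' : nat -> 'I_N) (n : nat) :
  (forall i, (i < n)%N -> y i = y' i) ->
  forall k, (k <= n)%N -> itin delta Id Exit x y k = itin delta Id Exit x y' k.
Proof.
move=> H; elim=> [|k IH] Hk //=.
rewrite IH ?(ltnW Hk) // H //.
Qed.

Lemma rho_le (R : realType) (N : nat) (Q : finType)
  (delta : Q -> 'I_N * 'I_N -> Q) (Id Exit : Q) (xi : R) x y n :
  0 < xi -> xi < 1 ->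
  (forall k, (k <= n)%N -> itin delta Id Exit x y k != Exit) ->
  rhoM delta Id Exit xi x y <= xi ^+ n.
Proof.
move=> xi0 xi1 H; rewrite /rhoM; case: pselect => [E|_]; last first.
  by rewrite exprn_ge0 // ltW.
case: ex_minnP => m Hm Hmin.
have nm : (n < m)%N.
  by rewrite ltnNge; apply/negP => mn; move: (H m mn); rewrite Hm.
apply: ler_wiXn2l; rewrite ?ltW //.
by rewrite -ltnS prednK // (leq_ltn_trans _ nm).
Qed.

Lemma rho_lt (R : realType) (N : nat) (Q : finType)
  (delta : Q -> 'I_N * 'I_N -> Q) (Id Exit : Q) (xi : R) x y n :
  0 < xi -> xi < 1 ->
  rhoM delta Id Exit xi x y < xi ^+ n ->
  forall k, (k <= n)%N -> itin delta Id Exit x y k != Exit.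
Proof.
move=> xi0 xi1 H k kn; apply/negP => Ek.
move: H; rewrite /rhoM; case: pselect => [E|NE]; last first.
  by exfalso; apply: NE; exists k.
case: ex_minnP => m Hm Hmin.
have mk := Hmin _ Ek.
apply/negP; rewrite -leNgt; apply: ler_wiXn2l; rewrite ?ltW //.
by rewrite (leq_trans (leq_pred m)) // (leq_trans mk).
Qed.

Definition infm (P : nat -> Prop) := forall M, exists m, (M <= m)%N /\ P m.

Lemma pigeon (N : nat) (a : nat -> nat -> 'I_N) n (P : nat -> Prop) :
  infm P -> exists i, infm (fun m => P m /\ a m n = i).
Proof.
move=> HP; apply: contrapT => Hn.
have H : forall i : 'I_N, exists M, forall m, (M <= m)%N -> ~ (P m /\ a m n = i).
  move=> i; apply: contrapT => Hi; apply: Hn; exists i => M.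
  apply: contrapT => HM; apply: Hi; exists M => m Mm Pm; apply: HM; by exists m.
have [f Hf] := choice H.
have [m [Mm Pm]] := HP (\max_(i < N) f i).
apply: (Hf (a m n) m) => //.
by apply: leq_trans Mm; apply: (leq_bigmax (F := f)).
Qed.

Section Konig.
Variables (N : nat) (a : nat -> nat -> 'I_N) (a0 : 'I_N).

Definition step (P : nat -> Prop) n : 'I_N :=
  xget a0 (fun i => infm (fun m => P m /\ a m n = i)).

Fixpoint Pn n : nat -> Prop :=
  match n with
  | 0 => fun _ => True
  | n'.+1 => fun m => Pn n' m /\ a m n' = step (Pn n') n'
  end.

Definition blim n := step (Pn n) n.

Lemma Pn_inf n : infm (Pn n).
Proof.
elim: n => [|n IH] /=; first by move=> M; exists M.
have := xgetPex a0 (@pigeon N a n _ IH).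
exact.
Qed.

Lemma Pn_agree n m : Pn n m -> forall i, (i < n)%N -> a m i = blim i.
Proof.
elim: n => [|n IH] //= [Hm Ha] i; rewrite ltnS leq_eqVlt => /orP [/eqP ->|lt].
  exact: Ha.
exact: IH.
Qed.
End Konig.

Theorem lemma2p3 (R : realType) (N : nat) (Q : finType)
  (delta : Q -> 'I_N * 'I_N -> Q) (Id Exit : Q) (xi : R) :
  Id != Exit ->
  (forall i j : 'I_N, (delta Id (i, j) == Id) = (i == j)) ->
  0 < xi -> xi < 1 ->
  pseudo_quasimetric (rhoM delta Id Exit xi) ->
  forall a : nat -> (nat -> 'I_N),
    (forall eps : R, 0 < eps -> exists K : nat, forall m n : nat,
        (K <= m)%N -> (K <= n)%N ->
        rho_tilde (rhoM delta Id Exit xi) (a m) (a n) < eps) ->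
    exists b : nat -> 'I_N,
      forall eps : R, 0 < eps -> exists K : nat, forall k : nat,
        (K <= k)%N -> rho_tilde (rhoM delta Id Exit xi) (a k) b < eps.
Proof.
move=> _ _ xi0 xi1 [C [C1 [rho0 [rhoxx [rhoC rhoT]]]]] a Hcau.
set rho := rhoM delta Id Exit xi in rho0 rhoxx rhoC rhoT *.
have C0 : 0 < C by apply: lt_le_trans C1.
have upper : forall x y, rho_tilde rho x y <= rho x y.
  move=> x y; apply: ge_inf; last by exists x, y.
  by exists 0 => r [p [q [_ [_ ->]]]].
have lower : forall x y, rho x y <= C * C * rho_tilde rho x y.
  move=> x y; rewrite -ler_pdivrMl ?mulr_gt0 //.
  apply: lb_le_inf; first by exists (rho x y), x, y.
  move=> r [p [q [Hp [Hq ->]]]].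
  rewrite ler_pdivrMl ?mulr_gt0 //.
  have h1 := rhoT x p y; rewrite Hp add0r in h1.
  have h2 := rhoT p q y; rewrite (rhoC q y) Hq addr0 in h2.
  apply: (le_trans h1); rewrite -mulrA ler_pM2l //.
have Hcau' : forall eps : R, 0 < eps -> exists K : nat, forall m n : nat,
    (K <= m)%N -> (K <= n)%N -> rho (a m) (a n) < eps.
  move=> eps e0.
  have [K HK] := Hcau (eps / (C * C)) (divr_gt0 e0 (mulr_gt0 C0 C0)).
  exists K => m n Km Kn; apply: (le_lt_trans (lower _ _)).
  by rewrite -ltr_pdivlMl ?mulr_gt0 // mulrC HK.
set b := @blim N a (a 0%N 0%N).
exists b => eps e0.
have [n Hn] := @pow_small R xi eps xi0 xi1 e0.
have [K HK] := Hcau' (xi ^+ n) (exprn_gt0 n xi0).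
exists K => k Kk.
have [m [Km Pm]] := @Pn_inf N a (a 0%N 0%N) n K.
have agree := @Pn_agree N a (a 0%N 0%N) n m Pm.
apply: (le_lt_trans (upper _ _)); apply: (le_lt_trans _ Hn).
apply: (@rho_le R N Q delta Id Exit xi) => // j jn.
rewrite -(@itin_prefix N Q delta Id Exit (a k) _ _ n agree j jn).
exact: (@rho_lt R N Q delta Id Exit xi _ _ n xi0 xi1 (HK k m Kk Km)).
Qed.
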